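(* Let $T$ be a $\mathcal P^{\mathbf A}$-theory and $\Phi(\overrightarrow x)$ a set of $\mathcal P^{\mathbf A}$-formulas. The following are equivalent: (i) for any models $\langle\mathbf A,\mathbf M\rangle\subseteq\langle\mathbf A,\mathbf N\rangle$ of $T$ and any tuple $\overrightarrow d$ of elements of $M$, if $\langle\mathbf A,\mathbf N\rangle\models\Phi[\overrightarrow d]$ then $\langle\mathbf A,\mathbf M\rangle\models\Phi[\overrightarrow d]$; (ii) there is a set $\Theta(\overrightarrow x)$ of universal $\mathcal P^{\mathbf A}$-formulas such that $T,\Phi\models\Theta$ and $T,\Theta\models\Phi$.
   Context: Fix a finite MTL-chain $\mathbf{A}$ (a finite linearly ordered MTL-algebra, possibly expanded with further operations), with top $1$ and bottom $0$. For a predicate language $\mathcal P$ containing a crisp equality symbol $\approx$, an $\mathbf{A}$-structure $\langle \mathbf A,\mathbf M\rangle$ consists of a nonempty domain $M$, functions $F_{\mathbf M}:M^n\to M$ for $n$-ary function symbols, and maps $P_{\mathbf M}:M^n\to A$ for $n$-ary predicate symbols; $\approx$ takes value $1$ on equal and $0$ on distinct elements. Truth values are computed Tarski-style: connectives by the operations of $\mathbf A$, $\forall$ by infimum, $\exists$ by supremum over the domain. $\langle\mathbf A,\mathbf M\rangle\models\Phi[\overrightarrow d]$ means every formula of $\Phi$ takes value $1$ at $\overrightarrow d$; a model of a theory (set of sentences) is a structure in which all its sentences take value $1$. $\mathcal P^{\mathbf A}$ is $\mathcal P$ expanded by a truth constant $\overline a$ for each $a\in A$, always interpreted as $a$; all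 structures are over the fixed $\mathbf A$. $\langle\mathbf A,\mathbf M\rangle\subseteq\langle\mathbf A,\mathbf N\rangle$ (substructure) means $M\subseteq N$ and function and predicate symbols are interpreted in $\mathbf M$ by restriction from $\mathbf N$. A universal formula has the form $(\forall\overrightarrow x)\psi$ with $\psi$ quantifier-free. $T,\Phi\models\Theta$ means: for every model $\langle\mathbf A,\mathbf M\rangle$ of $T$ and tuple $\overrightarrow d$ in $M$, if $\langle\mathbf A,\mathbf M\rangle\models\Phi[\overrightarrow d]$ then $\langle\mathbf A,\mathbf M\rangle\models\Theta[\overrightarrow d]$. *)

(* Defs.v *)
From Stdlib Require Import Classical ClassicalEpsilon.
From HB Require Import structures.
From mathcomp Require Import all_boot all_order.
Set Implicit Arguments. Unset Strict Implicit. Unset Printing Implicit Defensive.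
Import Order.TTheory.
Local Open Scope order_scope.

(* A finite, linearly ordered, bounded, integral, commutative residuated lattice
   (prelinearity holds automatically in a chain).  The lattice operations are
   min/max of the total order, 0 = \bot, 1 = \top. *)
Record MTLchain (disp : Order.disp_t) := {
  mcar :> finTBOrderType disp;
  mconj : mcar -> mcar -> mcar;
  mimp  : mcar -> mcar -> mcar;
  mconjC : commutative mconj;
  mconjA : associative mconj;
  mconj1 : left_id \top mconj;
  mres : forall a b c, (mconj a b <= c) = (a <= mimp b c);
  (* further operations of the (expanded) algebra *)
  mops : Type;
  mar  : mops -> nat;
  mop  : forall o, ('I_(mar o) -> mcar) -> mcar
}.

Record Lang := {
  fsym : Type; far : fsym -> nat;
  psym : Type; par : psym -> nat    (* predicate symbols (besides crisp equality) *)
}.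

Section Syntax.
Variables (disp : Order.disp_t) (A : MTLchain disp) (L : Lang).

Inductive term :=
| Var (k : nat)
| App (f : fsym L) (args : 'I_(far f) -> term).

Inductive formula :=
| Pred (p : psym L) (args : 'I_(par p) -> term)
| Eqf (t1 t2 : term)
| Cst (a : A)
| Conj (f1 f2 : formula)
| Imp (f1 f2 : formula)
| Wedge (f1 f2 : formula)
| Vee (f1 f2 : formula)
| Op (o : mops A) (args : 'I_(mar o) -> formula)
| All (x : nat) (f : formula)
| Ex (x : nat) (f : formula).

Fixpoint term_vars_in (P : nat -> Prop) (t : term) : Prop :=
  match t with
  | Var k => P k
  | App _ args => forall i, term_vars_in P (args i)
  end.

Fixpoint fv_in (P : nat -> Prop) (phi : formula) : Prop :=
  match phi with
  | Pred _ args => forall i, term_vars_in P (args i)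
  | Eqf t1 t2 => term_vars_in P t1 /\ term_vars_in P t2
  | Cst _ => True
  | Conj f1 f2 | Imp f1 f2 | Wedge f1 f2 | Vee f1 f2 => fv_in P f1 /\ fv_in P f2
  | Op _ args => forall i, fv_in P (args i)
  | All x f | Ex x f => fv_in (fun k => k = x \/ P k) f
  end.

Definition sentence (phi : formula) : Prop := fv_in (fun _ => False) phi.
Definition fv_below (n : nat) (phi : formula) : Prop := fv_in (fun k => (k < n)%N) phi.

Fixpoint qfree (phi : formula) : Prop :=
  match phi with
  | Pred _ _ | Eqf _ _ | Cst _ => True
  | Conj f1 f2 | Imp f1 f2 | Wedge f1 f2 | Vee f1 f2 => qfree f1 /\ qfree f2
  | Op _ args => forall i, qfree (args i)
  | All _ _ | Ex _ _ => False
  end.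

Definition universal (phi : formula) : Prop :=
  exists (xs : seq nat) (psi : formula), qfree psi /\ phi = foldr All psi xs.

End Syntax.

Definition decP (P : Prop) : bool :=
  if excluded_middle_informative P then true else false.

Record structure (disp : Order.disp_t) (A : MTLchain disp) (L : Lang) := {
  dom : Type;
  dom_inh : dom;
  ifun : forall f : fsym L, ('I_(far f) -> dom) -> dom;
  ipred : forall p : psym L, ('I_(par p) -> dom) -> A
}.

Section Semantics.
Variables (disp : Order.disp_t) (A : MTLchain disp) (L : Lang) (M : structure A L).

Definition infM (f : dom M -> A) : A :=
  \big[Order.min / \top]_(a : A | decP (exists m, f m = a)) a.
Definition supM (f : dom M -> A) : A :=
  \big[Order.max / \bot]_(a : A | decP (exists m, f m = a)) a.

Definition upd (v : nat -> dom M) (x : nat) (m : dom M) : nat -> dom M :=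
  fun k => if k == x then m else v k.

Fixpoint teval (v : nat -> dom M) (t : term L) : dom M :=
  match t with
  | Var k => v k
  | App f args => @ifun _ _ _ M f (fun i => teval v (args i))
  end.

Fixpoint eval (v : nat -> dom M) (phi : formula A L) : A :=
  match phi with
  | Pred p args => @ipred _ _ _ M p (fun i => teval v (args i))
  | Eqf t1 t2 => if decP (teval v t1 = teval v t2) then \top else \bot
  | Cst a => a
  | Conj f1 f2 => mconj (eval v f1) (eval v f2)
  | Imp f1 f2 => mimp (eval v f1) (eval v f2)
  | Wedge f1 f2 => Order.min (eval v f1) (eval v f2)
  | Vee f1 f2 => Order.max (eval v f1) (eval v f2)
  | Op o args => @mop _ A o (fun i => eval v (args i))
  | All x f => infM (fun m => eval (upd v x m) f)
  | Ex x f => supM (fun m => eval (upd v x m) f)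
  end.

Definition sat (Phi : formula A L -> Prop) (v : nat -> dom M) : Prop :=
  forall phi, Phi phi -> eval v phi = \top.

Definition models (T : formula A L -> Prop) : Prop :=
  forall phi, T phi -> forall v, eval v phi = \top.

End Semantics.
Arguments sat {disp A L} M Phi v.
Arguments models {disp A L} M T.
Arguments eval {disp A L} M v phi.
Arguments teval {disp A L} M v t.

Definition conseq (disp : Order.disp_t) (A : MTLchain disp) (L : Lang)
  (T Phi Theta : formula A L -> Prop) : Prop :=
  forall (M : structure A L), models M T ->
  forall v : nat -> dom M, sat M Phi v -> sat M Theta v.

Definition closedS (disp : Order.disp_t) (A : MTLchain disp) (L : Lang)
  (N : structure A L) (S : dom N -> Prop) : Prop :=
  forall (f : fsym L) (args : 'I_(far f) -> dom N),
    (forall i, S (args i)) -> S (@ifun _ _ _ N f args).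
Arguments closedS {disp A L} N S.

Definition substr (disp : Order.disp_t) (A : MTLchain disp) (L : Lang)
  (N : structure A L) (S : dom N -> Prop) (HS : closedS N S) (s0 : {x | S x})
  : structure A L :=
  {| dom := {x | S x};
     dom_inh := s0;
     ifun := fun f args =>
       exist S (@ifun _ _ _ N f (fun i => proj1_sig (args i)))
               (HS f (fun i => proj1_sig (args i)) (fun i => proj2_sig (args i)));
     ipred := fun p args => @ipred _ _ _ N p (fun i => proj1_sig (args i)) |}.

(* Main.v *)
Require Import Defs.
From mathcomp Require Import all_boot all_order.
From Stdlib Require Import Classical ClassicalEpsilon FunctionalExtensionality PropExtensionality ProofIrrelevance.
From mathcomp Require Import boolp classical_sets filter.
Set Implicit Arguments. Unset Strict Implicit. Unset Printing Implicit Defensive.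
Import Order.TTheory.
Local Open Scope order_scope.

Lemma decPE (P : Prop) : Defs.decP P = true <-> P.
Proof. rewrite /Defs.decP; case: excluded_middle_informative => //; split => //. Qed.

Lemma decPT (P : Prop) : P -> Defs.decP P = true.
Proof. by move/decPE. Qed.
Lemma decPF (P : Prop) : ~ P -> Defs.decP P = false.
Proof. rewrite /Defs.decP; case: excluded_middle_informative => //. Qed.

Section Ind.
Variables (disp : Order.disp_t) (A : MTLchain disp) (L : Lang).

Fixpoint term_ind' (P : term L -> Prop) (HV : forall k, P (Var L k))
  (HA : forall f args, (forall i, P (args i)) -> P (@App L f args)) (t : term L) : P t :=
  match t with
  | Var k => HV k
  | App f args => HA f args (fun i => term_ind' HV HA (args i))
  end.

Fixpoint formula_ind' (P : formula A L -> Prop)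
  (HP : forall p args, P (@Pred _ A L p args))
  (HE : forall t1 t2, P (@Eqf _ A L t1 t2))
  (HC : forall a, P (Cst L a))
  (HCj : forall f1 f2, P f1 -> P f2 -> P (Conj f1 f2))
  (HI : forall f1 f2, P f1 -> P f2 -> P (Imp f1 f2))
  (HW : forall f1 f2, P f1 -> P f2 -> P (Wedge f1 f2))
  (HV : forall f1 f2, P f1 -> P f2 -> P (Vee f1 f2))
  (HO : forall o args, (forall i, P (args i)) -> P (@Op _ A L o args))
  (HAl : forall x f, P f -> P (All x f))
  (HEx : forall x f, P f -> P (Ex x f)) (phi : formula A L) : P phi :=
  let F := formula_ind' HP HE HC HCj HI HW HV HO HAl HEx in
  match phi with
  | Pred p args => HP p args
  | Eqf t1 t2 => HE t1 t2
  | Cst a => HC a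
  | Conj f1 f2 => HCj f1 f2 (F f1) (F f2)
  | Imp f1 f2 => HI f1 f2 (F f1) (F f2)
  | Wedge f1 f2 => HW f1 f2 (F f1) (F f2)
  | Vee f1 f2 => HV f1 f2 (F f1) (F f2)
  | Op o args => HO o args (fun i => F (args i))
  | All x f => HAl x f (F f)
  | Ex x f => HEx x f (F f)
  end.
End Ind.

Section Basic.
Variables (disp : Order.disp_t) (A : MTLchain disp) (L : Lang).

Lemma imp_top (x y : A) : mimp x y = \top <-> x <= y.
Proof.
have := mres \top x y; rewrite mconj1 => ->.
by rewrite le1x; split => [->|/eqP].
Qed.

Lemma min_top (x y : A) : Order.min x y = \top <-> x = \top /\ y = \top.
Proof.
split; last by case=> -> ->; rewrite minxx.
move=> H; have h1 : \top <= Order.min x y by rewrite H.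
rewrite le_min !le1x in h1; by case/andP: h1 => /eqP -> /eqP ->.
Qed.

Section S.
Variable M : structure A L.

Lemma infM_le (f : dom M -> A) m : infM f <= f m.
Proof. rewrite /infM; apply: bigmin_le_cond; apply/decPE; by exists m. Qed.

Lemma infM_att (f : dom M -> A) : exists m, infM f = f m.
Proof.
rewrite /infM.
have Pj : Defs.decP (exists m, f m = f (dom_inh M)) by apply/decPE; exists (dom_inh M).
rewrite (bigmin_eq_arg _ _ _ _ Pj); last by move=> *; exact: lex1.
case: arg_minP => //= a /decPE [m <-] _; by exists m.
Qed.

Lemma infM_ge (f : dom M -> A) a : (forall m, a <= f m) -> a <= infM f.
Proof. move=> H; have [m ->] := infM_att f; exact: H. Qed.

Lemma infM_top (f : dom M -> A) : infM f = \top <-> forall m, f m = \top.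
Proof.
split.
- move=> H m; apply/eqP; rewrite -le1x -H; exact: infM_le.
- move=> H; apply/eqP; rewrite -le1x; apply: infM_ge => m; by rewrite H.
Qed.

Lemma supM_ge (f : dom M -> A) m : f m <= supM f.
Proof. rewrite /supM; apply: le_bigmax_cond; apply/decPE; by exists m. Qed.

Lemma supM_att (f : dom M -> A) : exists m, supM f = f m.
Proof.
rewrite /supM.
have Pj : Defs.decP (exists m, f m = f (dom_inh M)) by apply/decPE; exists (dom_inh M).
rewrite (bigmax_eq_arg _ _ _ _ Pj); last by move=> *; exact: le0x.
case: arg_maxP => //= a /decPE [m <-] _; by exists m.
Qed.

Lemma supM_le (f : dom M -> A) a : (forall m, f m <= a) -> supM f <= a.
Proof. move=> H; have [m ->] := supM_att f; exact: H. Qed.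
End S.

End Basic.

Section Sem.
Variables (disp : Order.disp_t) (A : MTLchain disp) (L : Lang).
Implicit Types (phi psi : formula A L).

Lemma tv_mono (P Q : nat -> Prop) (t : term L) :
  (forall k, P k -> Q k) -> term_vars_in P t -> term_vars_in Q t.
Proof.
move=> PQ; elim/term_ind': t => [k|f args IH] /=; first exact: PQ.
move=> H i; exact: IH.
Qed.

Lemma fv_mono phi : forall (P Q : nat -> Prop),
  (forall k, P k -> Q k) -> fv_in P phi -> fv_in Q phi.
Proof.
elim/formula_ind': phi => /=.
- move=> p args P Q PQ H i; exact: (tv_mono PQ).
- move=> t1 t2 P Q PQ [H1 H2]; split; exact: (tv_mono PQ).
- by [].
all: try (move=> f1 f2 IH1 IH2 P Q PQ [H1 H2]; split; [exact: (IH1 P Q) | exact: (IH2 P Q)]).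
- move=> o args IH P Q PQ H i; exact: (IH i P Q).
- move=> x f IH P Q PQ; apply: IH => k [->|/PQ]; by [left|right].
- move=> x f IH P Q PQ; apply: IH => k [->|/PQ]; by [left|right].
Qed.

Section OneM.
Variable M : structure A L.

Lemma teval_fv (P : nat -> Prop) (t : term L) (v w : nat -> dom M) :
  term_vars_in P t -> (forall k, P k -> v k = w k) -> teval M v t = teval M w t.
Proof.
move=> + E; elim/term_ind': t => [k|f args IH] /=; first exact: E.
move=> H; congr (ifun _); apply: functional_extensionality => i; exact: IH.
Qed.

Lemma upd_agree (P : nat -> Prop) (v w : nat -> dom M) x m :
  (forall k, P k -> v k = w k) ->
  forall k, k = x \/ P k -> upd v x m k = upd w x m k.
Proof.
move=> E k H; rewrite /upd; case: eqP => // /eqP nkx.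
case: H => [kx|]; first by rewrite kx eqxx in nkx.
exact: E.
Qed.

Lemma eval_fv phi : forall (P : nat -> Prop) (v w : nat -> dom M),
  fv_in P phi -> (forall k, P k -> v k = w k) -> eval M v phi = eval M w phi.
Proof.
elim/formula_ind': phi => /=.
- move=> p args P v w H E; congr (ipred _); apply: functional_extensionality => i.
  exact: (teval_fv (H i)).
- move=> t1 t2 P v w [H1 H2] E; by rewrite (teval_fv H1 E) (teval_fv H2 E).
- by [].
all: try (move=> f1 f2 IH1 IH2 P v w [H1 H2] E; by rewrite (IH1 P v w H1 E) (IH2 P v w H2 E)).
- move=> o args IH P v w H E; congr (mop _); apply: functional_extensionality => i.
  exact: (IH i P).
- move=> x f IH P v w H E; congr infM; apply: functional_extensionality => m.
  exact: (IH _ _ _ H (upd_agree m E)).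
- move=> x f IH P v w H E; congr supM; apply: functional_extensionality => m.
  exact: (IH _ _ _ H (upd_agree m E)).
Qed.

Lemma evalAll (xs : seq nat) psi : forall (v : nat -> dom M),
  eval M v (foldr (@All _ A L) psi xs) = \top <->
  forall w, (forall k, ~ List.In k xs -> w k = v k) -> eval M w psi = \top.
Proof.
elim: xs => [|x xs IH] v /=.
- split; last by apply; move=> k.
  move=> H w E; have -> : w = v by apply: functional_extensionality => k; exact: E.
  exact: H.
- rewrite infM_top; split.
  + move=> H w E; apply: (proj1 (IH (upd v x (w x))) (H (w x))).
    move=> k nk; rewrite /upd; case: eqP => [-> //|/eqP nkx].
    apply: E => -[kx|//]; by rewrite kx eqxx in nkx.
  + move=> H m; apply/(proj2 (IH _)) => w E; apply: H => k nk.
    rewrite E; last by move=> kin; apply: nk; right.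
    rewrite /upd; case: eqP => // kx; by case: nk; left.
Qed.

End OneM.
End Sem.

Lemma decP_iff (P Q : Prop) : (P <-> Q) -> Defs.decP P = Defs.decP Q.
Proof. move=> H; by rewrite (PropExtensionality.propositional_extensionality _ _ H). Qed.

Lemma sig_eqE (T : Type) (S : T -> Prop) (x y : {z | S z}) :
  x = y <-> proj1_sig x = proj1_sig y.
Proof.
split; first by move=> ->.
case: x => x px; case: y => y py /= exy; subst y.
by rewrite (proof_irrelevance _ px py).
Qed.

Section Sub.
Variables (disp : Order.disp_t) (A : MTLchain disp) (L : Lang).
Variables (N : structure A L) (S : dom N -> Prop) (HS : closedS N S) (s0 : {x | S x}).
Let Sb := substr HS s0.

Lemma teval_sub (v : nat -> dom Sb) (t : term L) :
  proj1_sig (teval Sb v t) = teval N (fun k => proj1_sig (v k)) t.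
Proof.
elim/term_ind': t => [k|f args IH] //=.
congr (ifun _); apply: functional_extensionality => i; exact: IH.
Qed.

Lemma eval_sub_qf (phi : formula A L) (v : nat -> dom Sb) :
  qfree phi -> eval Sb v phi = eval N (fun k => proj1_sig (v k)) phi.
Proof.
elim/formula_ind': phi => /=.
- move=> p args _; congr (ipred _); apply: functional_extensionality => i.
  exact: teval_sub.
- move=> t1 t2 _; rewrite (decP_iff (Q := teval N (fun k => proj1_sig (v k)) t1 =
      teval N (fun k => proj1_sig (v k)) t2)) //.
  by rewrite sig_eqE !teval_sub.
- by [].
all: try (move=> f1 f2 IH1 IH2 [H1 H2]; by rewrite IH1 // IH2).
- move=> o args IH H; congr (mop _); apply: functional_extensionality => i; exact: IH.
- by [].
- by [].
Qed.

Lemma universal_down (th : formula A L) (v : nat -> dom Sb) :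
  universal th -> eval N (fun k => proj1_sig (v k)) th = \top -> eval Sb v th = \top.
Proof.
case=> xs [psi [qpsi ->]] /evalAll H; apply/evalAll => w E.
rewrite eval_sub_qf //; apply: H => k nk; by rewrite E.
Qed.
End Sub.

Section Iso.
Variables (disp : Order.disp_t) (A : MTLchain disp) (L : Lang).
Variables (M M' : structure A L) (h : dom M -> dom M').
Hypotheses (hinj : forall x y, h x = h y -> x = y)
  (hsurj : forall y, exists x, h x = y)
  (hf : forall f ms, h (@ifun _ _ _ M f ms) = @ifun _ _ _ M' f (fun i => h (ms i)))
  (hp : forall p ms, @ipred _ _ _ M' p (fun i => h (ms i)) = @ipred _ _ _ M p ms).

Lemma teval_iso (v : nat -> dom M) t : teval M' (fun k => h (v k)) t = h (teval M v t).
Proof.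
elim/term_ind': t => [k|f args IH] //=.
rewrite hf; congr (ifun _); apply: functional_extensionality => i; exact: IH.
Qed.

Lemma infM_surj (F' : dom M' -> A) (F : dom M -> A) :
  (forall m, F' (h m) = F m) -> infM F' = infM F.
Proof.
move=> E; rewrite /infM; apply: eq_bigl => a; apply: decP_iff; split.
- case=> m' <-; have [m <-] := hsurj m'; by exists m.
- case=> m <-; exists (h m); exact: E.
Qed.

Lemma supM_surj (F' : dom M' -> A) (F : dom M -> A) :
  (forall m, F' (h m) = F m) -> supM F' = supM F.
Proof.
move=> E; rewrite /supM; apply: eq_bigl => a; apply: decP_iff; split.
- case=> m' <-; have [m <-] := hsurj m'; by exists m.
- case=> m <-; exists (h m); exact: E.
Qed.

Lemma upd_iso (v : nat -> dom M) x m :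
  upd (fun k => h (v k)) x (h m) = (fun k => h (upd v x m k)).
Proof. apply: functional_extensionality => k; rewrite /upd; by case: eqP. Qed.

Lemma eval_iso (phi : formula A L) : forall (v : nat -> dom M),
  eval M' (fun k => h (v k)) phi = eval M v phi.
Proof.
elim/formula_ind': phi => /=.
- move=> p args v; rewrite -hp; congr (ipred _); apply: functional_extensionality => i.
  exact: teval_iso.
- move=> t1 t2 v; rewrite !teval_iso; congr (if _ then _ else _); apply: decP_iff.
  split; [exact: hinj | by move=> ->].
- by [].
all: try (move=> f1 f2 IH1 IH2 v; by rewrite IH1 IH2).
- move=> o args IH v; congr (mop _); apply: functional_extensionality => i; exact: IH.
- move=> x f IH v; apply: infM_surj => m; by rewrite upd_iso IH.
- move=> x f IH v; apply: supM_surj => m; by rewrite upd_iso IH.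
Qed.
End Iso.

Section Ultra.
Variables (disp : Order.disp_t) (A : MTLchain disp) (L : Lang).
Variables (I : Type) (U : (I -> Prop) -> Prop).
Hypotheses (UI : forall X Y, U X -> U Y -> U (fun i => X i /\ Y i))
 (US : forall X Y : I -> Prop, (forall i, X i -> Y i) -> U X -> U Y)
 (U0 : ~ U (fun _ => False))
 (UC : forall X, U X \/ U (fun i => ~ X i)).
Variable N : I -> structure A L.

Lemma UT : U (fun _ => True).
Proof. case: (UC (fun _ => False)) => // H; apply: US H; by []. Qed.

Lemma U_ex X : U X -> exists i, X i.
Proof.
move=> H; apply: NNPP => nH; apply: U0; apply: US H => i Xi; apply: nH; by exists i.
Qed.

Lemma U_seq (T : eqType) (s : seq T) (X : T -> I -> Prop) :
  (forall j, j \in s -> U (X j)) -> U (fun i => forall j, j \in s -> X j i).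
Proof.
elim: s => [|a s IH] H.
- apply: US UT => i _ j; by rewrite in_nil.
- have H1 := H a (mem_head a s).
  have H2 : U (fun i => forall j, j \in s -> X j i).
    apply: IH => j js; apply: H; by rewrite in_cons js orbT.
  apply: US (UI H1 H2) => i [Xa Xs] j; rewrite in_cons => /orP [/eqP -> //|]; exact: Xs.
Qed.

Lemma U_fin (T : finType) (X : T -> I -> Prop) :
  (forall j, U (X j)) -> U (fun i => forall j, X j i).
Proof.
move=> H; have := @U_seq T (enum T) X (fun j _ => H j).
apply: US => i Hi j; apply: Hi; by rewrite mem_enum.
Qed.

Definition Pt := forall i, dom (N i).
Definition eqU (f g : Pt) := U (fun i => f i = g i).
Definition udom := {P : Pt -> Prop | exists f, P = eqU f}.
Definition cls (f : Pt) : udom := exist _ (eqU f) (ex_intro _ f erefl).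
Definition Pt_inh : Pt := fun i => dom_inh (N i).
Definition rep (x : udom) : Pt := epsilon (inhabits Pt_inh) (proj1_sig x).

Lemma eqU_refl f : eqU f f.
Proof. apply: US UT => i _; by []. Qed.
Lemma eqU_sym f g : eqU f g -> eqU g f.
Proof. apply: US => i; by []. Qed.
Lemma eqU_trans f g h : eqU f g -> eqU g h -> eqU f h.
Proof. move=> H1 H2; apply: US (UI H1 H2) => i [-> ->]; by []. Qed.

Lemma rep_spec x : proj1_sig x (rep x).
Proof.
rewrite /rep; apply: (epsilon_spec (inhabits Pt_inh) (proj1_sig x)); case: x => P [f Pf] /=; exists f; rewrite Pf; exact: eqU_refl.
Qed.

Lemma eqU_ext f g : eqU f g -> eqU f = eqU g.
Proof.
move=> H; apply: functional_extensionality => h; apply: PropExtensionality.propositional_extensionality.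
split => H'; [exact: eqU_trans (eqU_sym H) H' | exact: eqU_trans H H'].
Qed.

Lemma cls_eq f g : eqU f g -> cls f = cls g.
Proof. move=> H; apply/sig_eqE => /=; exact: eqU_ext. Qed.

Lemma cls_inj f g : cls f = cls g -> eqU f g.
Proof. move/sig_eqE => /= E; rewrite E; exact: eqU_refl. Qed.

Lemma rep_cls f : eqU (rep (cls f)) f.
Proof. apply: eqU_sym; exact: (rep_spec (cls f)). Qed.

Lemma cls_rep x : cls (rep x) = x.
Proof.
apply/sig_eqE => /=; have H := rep_spec x; have [f Pf] := proj2_sig x.
rewrite Pf in H *; apply: eqU_ext; exact: eqU_sym.
Qed.

Definition ulim (g : I -> A) : A := epsilon (inhabits \top) (fun a => U (fun i => g i = a)).

Lemma ulim_spec g : U (fun i => g i = ulim g).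
Proof.
rewrite /ulim; apply: (epsilon_spec (inhabits (\top : A)) (fun a => U (fun i => g i = a))); apply: NNPP => nH.
have H : forall a : A, U (fun i => ~ g i = a).
  move=> a; case: (UC (fun i => g i = a)) => // Ha; case: nH; by exists a.
have := U_fin H; move=> H'; apply: U0; apply: US H' => i Hi; exact: (Hi (g i)).
Qed.

Lemma ulim_eq g a : U (fun i => g i = a) -> ulim g = a.
Proof.
move=> H; have [i [e1 e2]] := U_ex (UI H (ulim_spec g)); by rewrite -e2 e1.
Qed.

Lemma ulim_ext g h : U (fun i => g i = h i) -> ulim g = ulim h.
Proof.
move=> H; apply: ulim_eq; apply: US (UI H (ulim_spec h)) => i [-> ->]; by [].
Qed.

Lemma ulim_const a : ulim (fun _ => a) = a.
Proof. apply: ulim_eq; apply: US UT => i _; by []. Qed.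

Lemma ulim_le g h : (forall i, g i <= h i) -> ulim g <= ulim h.
Proof.
move=> H; have [i [e1 e2]] := U_ex (UI (ulim_spec g) (ulim_spec h)).
by rewrite -e1 -e2.
Qed.

Lemma ulim2 (op : A -> A -> A) g h :
  ulim (fun i => op (g i) (h i)) = op (ulim g) (ulim h).
Proof. apply: ulim_eq; apply: US (UI (ulim_spec g) (ulim_spec h)) => i [-> ->]; by []. Qed.

Lemma ulimF (n : nat) (op : ('I_n -> A) -> A) (G : 'I_n -> I -> A) :
  ulim (fun i => op (fun j => G j i)) = op (fun j => ulim (G j)).
Proof.
apply: ulim_eq; apply: US (U_fin (fun j => ulim_spec (G j))) => i Hi.
congr op; apply: functional_extensionality => j; exact: Hi.
Qed.

Definition UP : structure A L :=
  {| dom := udom;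
     dom_inh := cls Pt_inh;
     ifun := fun f args => cls (fun i => @ifun _ _ _ (N i) f (fun j => rep (args j) i));
     ipred := fun p args => ulim (fun i => @ipred _ _ _ (N i) p (fun j => rep (args j) i)) |}.

Definition rv (V : nat -> dom UP) (i : I) : nat -> dom (N i) := fun k => rep (V k) i.

Lemma teval_UP (V : nat -> dom UP) (t : term L) :
  teval UP V t = cls (fun i => teval (N i) (rv V i) t).
Proof.
elim/term_ind': t => [k|f args IH] /=; first by rewrite cls_rep.
apply: cls_eq.
have H : forall j, U (fun i => rep (teval UP V (args j)) i = teval (N i) (rv V i) (args j)).
  move=> j; rewrite IH; exact: rep_cls.
apply: US (U_fin H) => i Hi; congr (ifun _); apply: functional_extensionality => j; exact: Hi.
Qed.

Lemma rv_upd (V : nat -> dom UP) x m i :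
  rv (upd V x m) i = upd (rv V i) x (rep m i).
Proof. apply: functional_extensionality => k; rewrite /rv /upd; by case: eqP. Qed.

Lemma los (phi : formula A L) : forall (V : nat -> dom UP),
  eval UP V phi = ulim (fun i => eval (N i) (rv V i) phi).
Proof.
elim/formula_ind': phi => /=.
- move=> p args V; apply: ulim_ext.
  have H : forall j, U (fun i => rep (teval UP V (args j)) i = teval (N i) (rv V i) (args j)).
    move=> j; rewrite teval_UP; exact: rep_cls.
  apply: US (U_fin H) => i Hi; congr (ipred _); apply: functional_extensionality => j; exact: Hi.
- move=> t1 t2 V; rewrite !teval_UP.
  set g1 := fun i => _; set g2 := fun i => _.
  case: (Classical_Prop.classic (eqU g1 g2)) => H.
  + rewrite decPT; last exact: cls_eq.
    apply/esym/ulim_eq; apply: US H => i Hi; by rewrite decPT.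
  + rewrite decPF; last by move/cls_inj.
    case: (UC (fun i => g1 i = g2 i)) => // H'.
    apply/esym/ulim_eq; apply: US H' => i Hi; by rewrite decPF.
- move=> a V; by rewrite ulim_const.
- move=> f1 f2 IH1 IH2 V; by rewrite IH1 IH2 ulim2.
- move=> f1 f2 IH1 IH2 V; by rewrite IH1 IH2 ulim2.
- move=> f1 f2 IH1 IH2 V; by rewrite IH1 IH2 (ulim2 Order.min).
- move=> f1 f2 IH1 IH2 V; by rewrite IH1 IH2 (ulim2 Order.max).
- move=> o args IH V; rewrite (ulimF (@mop _ A o) (fun j i => eval (N i) (rv V i) (args j))).
  congr (mop _); apply: functional_extensionality => j; exact: IH.
- move=> x f IH V.
  set G := fun i (y : dom (N i)) => eval (N i) (upd (rv V i) x y) f.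
  have E : forall m : dom UP, eval UP (@upd _ _ _ UP V x m) f = ulim (fun i => G i (rep m i)).
    move=> m; rewrite IH; apply: ulim_ext; apply: US UT => i _; by rewrite /G rv_upd.
  have -> : (fun m : dom UP => eval UP (@upd _ _ _ UP V x m) f) = (fun m : dom UP => ulim (fun i => G i (rep m i))).
    apply: functional_extensionality => m; exact: E.
  change (infM (fun m : dom UP => ulim (fun i => G i (rep m i))) = ulim (fun i => infM (G i))).
  apply: le_anti; apply/andP; split.
  + pose mp : Pt := fun i => epsilon (inhabits (dom_inh (N i))) (fun y => infM (G i) = G i y).
    have mpE : forall i, infM (G i) = G i (mp i).
      move=> i; apply: (epsilon_spec (inhabits (dom_inh (N i))) (fun y => infM (G i) = G i y)).
      exact: infM_att.
    have := infM_le (fun m : dom UP => ulim (fun i => G i (rep m i))) (cls mp : dom UP).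
    move/le_trans; apply.
    rewrite (@ulim_ext _ (fun i => G i (mp i))); last first.
      apply: US (rep_cls mp) => i ->; by [].
    rewrite (@ulim_ext (fun i => G i (mp i)) (fun i => infM (G i))) //.
    apply: US UT => i _; by rewrite mpE.
  + apply: infM_ge => m; apply: ulim_le => i; exact: infM_le.
- move=> x f IH V.
  set G := fun i (y : dom (N i)) => eval (N i) (upd (rv V i) x y) f.
  have E : forall m : dom UP, eval UP (@upd _ _ _ UP V x m) f = ulim (fun i => G i (rep m i)).
    move=> m; rewrite IH; apply: ulim_ext; apply: US UT => i _; by rewrite /G rv_upd.
  have -> : (fun m : dom UP => eval UP (@upd _ _ _ UP V x m) f) = (fun m : dom UP => ulim (fun i => G i (rep m i))).
    apply: functional_extensionality => m; exact: E.
  change (supM (fun m : dom UP => ulim (fun i => G i (rep m i))) = ulim (fun i => supM (G i))).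
  apply: le_anti; apply/andP; split.
  + apply: supM_le => m; apply: ulim_le => i; exact: supM_ge.
  + pose mp : Pt := fun i => epsilon (inhabits (dom_inh (N i))) (fun y => supM (G i) = G i y).
    have mpE : forall i, supM (G i) = G i (mp i).
      move=> i; apply: (epsilon_spec (inhabits (dom_inh (N i))) (fun y => supM (G i) = G i y)).
      exact: supM_att.
    have := supM_ge (fun m : dom UP => ulim (fun i => G i (rep m i))) (cls mp : dom UP).
    apply: le_trans.
    rewrite (@ulim_ext (fun i => G i (rep (cls mp) i)) (fun i => G i (mp i))); last first.
      apply: US (rep_cls mp) => i ->; by [].
    rewrite (@ulim_ext (fun i => G i (mp i)) (fun i => supM (G i))) //.
    apply: US UT => i _; by rewrite mpE.
Qed.
End Ultra.

Lemma In_of_mem (T : eqType) (x : T) s : x \in s -> List.In x s.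
Proof. elim: s => //= a s IH; rewrite in_cons => /orP [/eqP ->|/IH]; by [left|right]. Qed.

Lemma mem_of_In (T : eqType) (x : T) s : List.In x s -> x \in s.
Proof. elim: s => //= a s IH [->|/IH]; rewrite in_cons ?eqxx // => ->; by rewrite orbT. Qed.

Fixpoint idx (T : Type) (m : T) (s : seq T) : nat :=
  match s with [::] => 0 | x :: s' => if Defs.decP (x = m) then 0 else (idx m s').+1 end.

Lemma idx_nth T (d m : T) s : List.In m s -> nth d s (idx m s) = m /\ (idx m s < size s)%N.
Proof.
elim: s => //= x s IH H.
case: (Classical_Prop.classic (x = m)) => [xm|nx]; first by rewrite decPT.
rewrite decPF //=; case: H => [//|H]; exact: IH H.
Qed.

Lemma In_flatten T (s : seq T) ss : List.In s ss -> forall x, List.In x s -> List.In x (flatten ss).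
Proof.
elim: ss => //= s' ss IH [-> x xs|H x xs]; apply: List.in_or_app; [left|right] => //.
exact: IH.
Qed.

Section Wedge.
Variables (disp : Order.disp_t) (A : MTLchain disp) (L : Lang).

Definition BI (a b : formula A L) := Wedge (Imp a b) (Imp b a).
Definition bigW (l : seq (formula A L)) := foldr (@Wedge _ A L) (Cst L \top) l.

Lemma evalBI (K : structure A L) w a b : eval K w (BI a b) = \top <-> eval K w a = eval K w b.
Proof.
rewrite /BI /= min_top !imp_top; split; first by case=> h1 h2; apply: le_anti; rewrite h1 h2.
by move=> ->; rewrite lexx.
Qed.

Lemma evalW (K : structure A L) w l :
  eval K w (bigW l) = \top <-> forall psi, List.In psi l -> eval K w psi = \top.
Proof.
elim: l => [|a l IH] /=; first by split.
rewrite min_top IH; split; first by case=> h1 h2 psi [<-|]; [exact h1|exact: h2].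
move=> H; split; [apply: H; by left | move=> psi Hp; apply: H; by right].
Qed.

Lemma qfW l : (forall psi, List.In psi l -> qfree psi) -> qfree (bigW l).
Proof.
elim: l => [|a l IH] //= H; split; [apply: H; by left | apply: IH => psi Hp; apply: H; by right].
Qed.

Lemma fvW P l : (forall psi, List.In psi l -> fv_in P psi) -> fv_in P (bigW l).
Proof.
elim: l => [|a l IH] //= H; split; [apply: H; by left | apply: IH => psi Hp; apply: H; by right].
Qed.

Lemma fvAll xs : forall P (psi : formula A L),
  fv_in (fun k => List.In k xs \/ P k) psi -> fv_in P (foldr (@All _ A L) psi xs).
Proof.
elim: xs => [|x xs IH] P psi /= H.
- apply: fv_mono H => k [[]|//].
- apply: IH; apply: fv_mono H => k [[->|kx]|Pk]; [right; left|left|right; right] => //.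
Qed.
End Wedge.

Lemma ultra_ex (I : Type) (B : I -> I -> Prop) (i0 : I)
 (Hinter : forall i j, exists k, forall x, B k x -> B i x /\ B j x)
 (Hne : forall i, exists x, B i x) :
 exists U : (I -> Prop) -> Prop,
   (forall i, U (B i)) /\ (forall X Y, U X -> U Y -> U (fun x => X x /\ Y x)) /\
   (forall X Y : I -> Prop, (forall x, X x -> Y x) -> U X -> U Y) /\
   (~ U (fun _ => False)) /\ (forall X, U X \/ U (fun x => ~ X x)).
Proof.
have FF : Filter (filter_from setT B).
  apply: (@filter_fromT_filter I I B); first by exists i0.
  move=> i j; have [k Hk] := Hinter i j; exists k => x /Hk [] ? ?; by split.
have PF : ProperFilter (filter_from setT B).
  apply: (filter_from_proper FF) => i _; have [x Hx] := Hne i; by exists x.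
have [G [UG sub]] := ultraFilterLemma PF.
exists G; split; [|split; [|split; [|split]]].
- move=> i; apply: sub; exists i => //.
- move=> X Y GX GY; exact: (filterI GX GY).
- move=> X Y XY GX; exact: (filterS XY GX).
- move=> H; have PG := @ultra_proper _ _ UG.
  by apply: (@filter_not_empty _ G PG).
- move=> X; exact: (in_ultra_setVsetC X UG).
Qed.

Section Key.
Variables (disp : Order.disp_t) (A : MTLchain disp) (L : Lang).
Variables (T Phi : formula A L -> Prop) (n : nat).
Hypothesis HPhi : forall phi, Phi phi -> fv_below n phi.
Variables (M : structure A L) (v : nat -> dom M).
Hypothesis Hnt : (\bot : A) != \top.
Hypothesis HTh : forall th, universal th -> fv_below n th ->
  conseq T Phi (fun phi => phi = th) -> eval M v th = \top.

Inductive fact : Type :=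
| FF (f : Defs.fsym L) of ('I_(far f) -> dom M)
| FP (p : Defs.psym L) of ('I_(par p) -> dom M)
| FE of dom M & dom M.

Definition elems (ph : fact) : seq (dom M) :=
  match ph with
  | FF f ms => map ms (enum 'I_(far f)) ++ [:: @ifun _ _ _ M f ms]
  | FP p ms => map ms (enum 'I_(par p))
  | FE m1 m2 => [:: m1; m2]
  end.

Definition Elist (i : seq fact) := map v (iota 0 n) ++ flatten (map elems i).
Definition vx (E : seq (dom M)) (m : dom M) : term L := Var L (idx m E).

Definition factf (E : seq (dom M)) (ph : fact) : formula A L :=
  match ph with
  | FF f ms => Eqf A (@App L f (fun j => vx E (ms j))) (vx E (@ifun _ _ _ M f ms))
  | FP p ms => BI (@Pred _ A L p (fun j => vx E (ms j))) (Cst L (@ipred _ _ _ M p ms))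
  | FE m1 m2 => if Defs.decP (m1 = m2) then Cst L \top
                else Imp (Eqf A (vx E m1) (vx E m2)) (Cst L \bot)
  end.

Definition deqs E := map (fun k => Eqf A (Var L k) (vx E (v k))) (iota 0 n).
Definition delta i := bigW (map (factf (Elist i)) i ++ deqs (Elist i)).
Definition cc : A := \big[Order.max/(\bot : A)]_(a : A | a < \top) a.
Definition theta i := foldr (@All _ A L) (Imp (delta i) (Cst L cc)) (iota n (size (Elist i) - n)).

Lemma cc_lt : cc < \top.
Proof. apply/bigmax_ltP; split => //; by rewrite lt_neqAle Hnt le0x. Qed.

Lemma imp_cc (x : A) : mimp x cc = \top <-> x < \top.
Proof.
rewrite imp_top; split; first by move=> h; exact: le_lt_trans h cc_lt.
by move=> h; apply: le_bigmax_cond.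
Qed.

Lemma ms_In k (ms : 'I_k -> dom M) j : List.In (ms j) (map ms (enum 'I_k)).
Proof. apply: List.in_map; apply: In_of_mem; by rewrite mem_enum. Qed.

Lemma In_Elist i ph m : List.In ph i -> List.In m (elems ph) -> List.In m (Elist i).
Proof.
move=> Hi Hm; apply: List.in_or_app; right; apply: (In_flatten (s := elems ph)) => //.
exact: List.in_map.
Qed.

Lemma In_Elist_v i k : (k < n)%N -> List.In (v k) (Elist i).
Proof.
move=> kn; apply: List.in_or_app; left; apply: List.in_map; apply: In_of_mem.
by rewrite mem_iota.
Qed.

Lemma size_Elist i : (n <= size (Elist i))%N.
Proof. by rewrite /Elist size_cat size_map size_iota leq_addr. Qed.

Lemma idx_lt i m : List.In m (Elist i) -> (idx m (Elist i) < size (Elist i))%N.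
Proof. move=> H; exact: (proj2 (idx_nth (dom_inh M) H)). Qed.

Lemma facts_in i ph : List.In ph i -> forall m, List.In m (elems ph) -> List.In m (Elist i).
Proof. move=> Hi m Hm; exact: In_Elist Hi Hm. Qed.

Lemma factf_fv i ph : List.In ph i -> fv_in (fun k => (k < size (Elist i))%N) (factf (Elist i) ph).
Proof.
move=> Hi; have F := facts_in Hi.
destruct ph as [f ms|p ms|m1 m2]; simpl.
- split; last by apply: idx_lt; apply: F; apply: List.in_or_app; right; left.
  move=> j; apply: idx_lt; apply: F; apply: List.in_or_app; left; exact: ms_In.
- split; split => //= j; apply: idx_lt; apply: F; exact: ms_In.
- case: (Defs.decP (m1 = m2)) => //=; split => //; split; apply: idx_lt; apply: F => /=; tauto.
Qed.

Lemma factf_qf E ph : qfree (factf E ph).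
Proof. case: ph => [f ms|p ms|m1 m2] //=; case: (Defs.decP (m1 = m2)) => //. Qed.

Lemma delta_fv i : fv_in (fun k => (k < size (Elist i))%N) (delta i).
Proof.
apply: fvW => psi Hpsi; case: (List.in_app_or _ _ _ Hpsi) => [/(proj1 (List.in_map_iff _ _ _)) [ph [Eph Hph]]|/(proj1 (List.in_map_iff _ _ _)) [k [Ek Hk]]]; subst psi.
- exact: factf_fv.
- have kn : (k < n)%N by move/mem_of_In: Hk; rewrite mem_iota.
  split => /=; first exact: leq_trans kn (size_Elist i).
  apply: idx_lt; exact: In_Elist_v.
Qed.

Lemma theta_univ i : universal (theta i).
Proof.
exists (iota n (size (Elist i) - n)), (Imp (delta i) (Cst L cc)); split => //; split => //.
apply: qfW => psi Hpsi; case: (List.in_app_or _ _ _ Hpsi) => [/(proj1 (List.in_map_iff _ _ _)) [ph [Eph _]]|/(proj1 (List.in_map_iff _ _ _)) [k [Ek _]]]; subst psi => //.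
exact: factf_qf.
Qed.

Lemma theta_fv i : fv_below n (theta i).
Proof.
apply: fvAll => /=; split => //; apply: fv_mono (delta_fv i) => k ks.
case: (ltnP k n) => kn; [by right | left; apply: In_of_mem].
by rewrite mem_iota (subnKC (size_Elist i)) kn ks.
Qed.

Definition ve i (j : nat) : dom M :=
  if (j < size (Elist i))%N then nth (dom_inh M) (Elist i) j else v j.

Lemma ve_idx i m : List.In m (Elist i) -> ve i (idx m (Elist i)) = m.
Proof. move=> H; have [h1 h2] := idx_nth (dom_inh M) H; by rewrite /ve h2 h1. Qed.

Lemma ve_small i k : (k < n)%N -> ve i k = v k.
Proof.
move=> kn; rewrite /ve (leq_trans kn (size_Elist i)) /Elist nth_cat size_map size_iota kn.
by rewrite (nth_map 0) ?size_iota // nth_iota.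
Qed.

Lemma delta_M i : eval M (ve i) (delta i) = \top.
Proof.
apply/evalW => psi Hpsi; case: (List.in_app_or _ _ _ Hpsi) => [/(proj1 (List.in_map_iff _ _ _)) [ph [Eph Hph]]|/(proj1 (List.in_map_iff _ _ _)) [k [Ek Hk]]]; subst psi.
- have F := facts_in Hph.
  destruct ph as [f ms|p ms|m1 m2]; rewrite /factf.
  + rewrite /= decPT // ve_idx; last by apply: F; apply: List.in_or_app; right; left.
    congr (ifun _); apply: functional_extensionality => j; rewrite ve_idx //.
    apply: F; apply: List.in_or_app; left; exact: ms_In.
  + apply/evalBI => /=; congr (ipred _); apply: functional_extensionality => j; rewrite ve_idx //.
    apply: F; exact: ms_In.
  + case: (Classical_Prop.classic (m1 = m2)) => [e|ne]; first by rewrite decPT.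
    rewrite decPF // /= decPF; first by apply/imp_top.
    rewrite !ve_idx //; apply: F => /=; tauto.
- have kn : (k < n)%N by move/mem_of_In: Hk; rewrite mem_iota.
  rewrite /= decPT // ve_small // ve_idx //; exact: In_Elist_v.
Qed.

Lemma theta_M i : eval M v (theta i) <> \top.
Proof.
move/evalAll => /(_ (ve i)) H.
have : eval M (ve i) (Imp (delta i) (Cst L cc)) = \top.
  apply: H => k nk; rewrite /ve; case: ifP => // ks.
  have kn : (k < n)%N.
    rewrite ltnNge; apply/negP => nk'; apply: nk; apply: In_of_mem.
    by rewrite mem_iota (subnKC (size_Elist i)) nk' ks.
  by rewrite -(ve_small i kn) /ve ks.
rewrite /= delta_M => /imp_cc; by rewrite ltxx.
Qed.

Definition Kpair := {K : structure A L & nat -> dom K}.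
Definition goodK i (p : Kpair) :=
  models (projT1 p) T /\ sat (projT1 p) Phi (projT2 p) /\
  eval (projT1 p) (projT2 p) (delta i) = \top.

Lemma exK i : exists p, goodK i p.
Proof.
have nc : ~ conseq T Phi (fun phi => phi = theta i).
  move=> C; apply: (theta_M (i := i)); apply: HTh => //; [exact: theta_univ | exact: theta_fv].
apply: NNPP => H; apply: nc => K HK w Hw th ->; apply: NNPP => Hne.
have : ~ (forall u, (forall k, ~ List.In k (iota n (size (Elist i) - n)) -> u k = w k) ->
   eval K u (Imp (delta i) (Cst L cc)) = \top).
  by move=> H'; apply: Hne; apply/evalAll.
move/Classical_Pred_Type.not_all_ex_not => [u Hu0].
have [Hu Hne'] := Classical_Prop.imply_to_and _ _ Hu0.
apply: H; exists (existT _ K u); split => //; split.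
- move=> phi Pphi /=; rewrite -(Hw phi Pphi); apply: (eval_fv (HPhi Pphi)) => k kn.
  apply: Hu => /mem_of_In; by rewrite mem_iota leqNgt kn.
- simpl; apply: NNPP => dt; apply: Hne'; rewrite /=; apply/imp_cc; rewrite ltx1; exact/eqP.
Qed.

Definition pk i : Kpair := epsilon (inhabits (existT _ M v : Kpair)) (goodK i).
Lemma pk_good i : goodK i (pk i).
Proof. exact: (epsilon_spec (inhabits (existT _ M v : Kpair)) (goodK i) (exK i)). Qed.

Definition Nsel i := projT1 (pk i).
Definition usel i : nat -> dom (Nsel i) := projT2 (pk i).

Lemma fact_true i ph : List.In ph i -> eval (Nsel i) (usel i) (factf (Elist i) ph) = \top.
Proof.
move=> H; have [_ [_ D]] := pk_good i; move/evalW: D; apply.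
apply: List.in_or_app; left; exact: List.in_map.
Qed.

Lemma deq_true i k : (k < n)%N -> usel i k = usel i (idx (v k) (Elist i)).
Proof.
move=> kn; have [_ [_ D]] := pk_good i; move/evalW: D => /(_ (Eqf A (Var L k) (vx (Elist i) (v k)))).
rewrite /=; case: (Classical_Prop.classic (usel i k = usel i (idx (v k) (Elist i)))) => // ne.
rewrite decPF // => H; have : (\bot : A) = \top.
  apply: H; apply: List.in_or_app; right; apply: (List.in_map (fun k => Eqf A (Var L k) (vx (Elist i) (v k)))).
  apply: In_of_mem; by rewrite mem_iota.
by move/eqP; rewrite (negbTE Hnt).
Qed.

Lemma Eqf_true (K : structure A L) w t1 t2 :
  eval K w (Eqf A t1 t2) = \top -> teval K w t1 = teval K w t2.
Proof.
rewrite /=; case: (Classical_Prop.classic (teval K w t1 = teval K w t2)) => // ne.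
rewrite decPF // => /eqP; by rewrite (negbTE Hnt).
Qed.


Hypothesis HM : models M T.
Hypothesis HI : forall (N : structure A L) (S : dom N -> Prop) (HS : closedS N S)
          (s0 : {x | S x}),
      models N T -> models (substr HS s0) T ->
      forall v : nat -> {x | S x},
        sat N Phi (fun k => proj1_sig (v k)) -> sat (substr HS s0) Phi v.

Section WithU.
Variable U : (seq fact -> Prop) -> Prop.
Hypotheses (UI : forall X Y, U X -> U Y -> U (fun i => X i /\ Y i))
 (US : forall X Y : seq fact -> Prop, (forall i, X i -> Y i) -> U X -> U Y)
 (U0 : ~ U (fun _ => False))
 (UC : forall X, U X \/ U (fun i => ~ X i)).
Hypothesis HUB : forall i, U (fun j => forall x, List.In x i -> List.In x j).

Definition UPs := UP U Nsel.
Definition emb (m : dom M) : dom UPs := cls U (fun i => usel i (idx m (Elist i))).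

Lemma Ufact ph : U (fun i => List.In ph i).
Proof. apply: US (HUB [:: ph]) => i H; apply: H; by left. Qed.

Lemma rep_emb m : U (fun i => rep (emb m) i = usel i (idx m (Elist i))).
Proof. exact: (rep_cls US U0 UC). Qed.

Lemma emb_fun f ms : emb (@ifun _ _ _ M f ms) = @ifun _ _ _ UPs f (fun j => emb (ms j)).
Proof.
apply: (cls_eq UI US).
have H1 := U_fin UI US U0 UC (fun j => rep_emb (ms j)).
apply: US (UI (Ufact (FF ms)) H1) => i [Hi Hr].
have := fact_true Hi; move/Eqf_true => /= E.
rewrite -E; congr (ifun _); apply: functional_extensionality => j; by rewrite Hr.
Qed.

Lemma emb_pred p ms : @ipred _ _ _ UPs p (fun j => emb (ms j)) = @ipred _ _ _ M p ms.
Proof.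
apply: (ulim_eq UI US U0 UC).
have H1 := U_fin UI US U0 UC (fun j => rep_emb (ms j)).
apply: US (UI (Ufact (FP ms)) H1) => i [Hi Hr].
have := fact_true Hi; rewrite /factf; move/evalBI => /= E.
rewrite -E; congr (ipred _); apply: functional_extensionality => j; by rewrite Hr.
Qed.

Lemma emb_inj m1 m2 : emb m1 = emb m2 -> m1 = m2.
Proof.
move/(cls_inj US U0 UC) => E; apply: NNPP => ne.
have [i [Hi Ei]] := U_ex US U0 (UI (Ufact (FE m1 m2)) E).
have := fact_true Hi; rewrite /factf decPF // /= decPT //= => /imp_top H.
move: Hnt; by rewrite -le1x H.
Qed.

Definition Semb (x : dom UPs) : Prop := exists m, emb m = x.

Lemma Semb_closed : closedS UPs Semb.
Proof.
move=> f args Hargs.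
pose pre := fun j => epsilon (inhabits (dom_inh M)) (fun m => emb m = args j).
have Hpre : forall j, emb (pre j) = args j.
  move=> j; exact: (epsilon_spec (inhabits (dom_inh M)) (fun m => emb m = args j) (Hargs j)).
exists (@ifun _ _ _ M f pre); rewrite emb_fun; congr (ifun _).
apply: functional_extensionality => j; exact: Hpre.
Qed.

Definition s0 : {x | Semb x} := exist _ (emb (dom_inh M)) (ex_intro _ (dom_inh M) erefl).
Definition Sb := substr Semb_closed s0.
Definition hh (m : dom M) : dom Sb := exist Semb (emb m) (ex_intro _ m erefl).

Lemma hinj x y : hh x = hh y -> x = y.
Proof. move/sig_eqE => /=; exact: emb_inj. Qed.

Lemma hsurj (y : dom Sb) : exists x, hh x = y.
Proof. case: y => x [m Em]; exists m; apply/sig_eqE => /=; exact: Em. Qed.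

Lemma hf f ms : hh (@ifun _ _ _ M f ms) = @ifun _ _ _ Sb f (fun i => hh (ms i)).
Proof. apply/sig_eqE => /=; exact: emb_fun. Qed.

Lemma hp p ms : @ipred _ _ _ Sb p (fun i => hh (ms i)) = @ipred _ _ _ M p ms.
Proof. exact: emb_pred. Qed.

Lemma modUP : models UPs T.
Proof.
move=> phi Tphi V; rewrite (los UI US U0 UC); apply: (ulim_eq UI US U0 UC).
apply: US (UT US U0 UC) => i _; have [HK _] := pk_good i; exact: HK.
Qed.

Lemma modSb : models Sb T.
Proof.
move=> phi Tphi V'.
pose W k := epsilon (inhabits (dom_inh M)) (fun m => hh m = V' k).
have HW : forall k, hh (W k) = V' k.
  move=> k; exact: (epsilon_spec (inhabits (dom_inh M)) (fun m => hh m = V' k) (hsurj (V' k))).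
have -> : V' = fun k => hh (W k) by apply: functional_extensionality => k; rewrite HW.
rewrite (eval_iso hinj hsurj hf hp); exact: HM.
Qed.

Lemma HsatUP : sat UPs Phi (fun k => proj1_sig (hh (v k))).
Proof.
move=> phi Pphi; rewrite (los UI US U0 UC); apply: (ulim_eq UI US U0 UC).
have H1 : U (fun i => forall k, k \in iota 0 n -> rep (emb (v k)) i = usel i k).
  apply: (U_seq UI US U0 UC) => k; rewrite mem_iota add0n => kn.
  apply: US (rep_emb (v k)) => i ->; by rewrite -deq_true.
apply: US H1 => i Hi.
rewrite (eval_fv (HPhi Pphi) (w := usel i)).
- have [_ [HS _]] := pk_good i; exact: HS Pphi.
- move=> k kn; apply: Hi; by rewrite mem_iota.
Qed.

Lemma satM_U : sat M Phi v.
Proof.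
move=> phi Pphi.
have := HI modUP modSb HsatUP Pphi.
by rewrite (eval_iso hinj hsurj hf hp).
Qed.
End WithU.

Lemma satM : sat M Phi v.
Proof.
have Hin : forall i j : seq fact, exists k, forall x,
    (forall y, List.In y k -> List.In y x) ->
    (forall y, List.In y i -> List.In y x) /\ (forall y, List.In y j -> List.In y x).
  move=> i j; exists (i ++ j) => x H; split => y Hy; apply: H; apply: List.in_or_app; by [left|right].
have Hne : forall i : seq fact, exists x, forall y, List.In y i -> List.In y x.
  move=> i; by exists i.
have [U [HB [UI [US [U0 UC]]]]] :=
  @ultra_ex (seq fact) (fun i j => forall x, List.In x i -> List.In x j) [::] Hin Hne.
exact: (satM_U UI US U0 UC HB).
Qed.
End Key.

Theorem mainTheorem3 (disp : Order.disp_t) (A : MTLchain disp) (L : Lang)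
  (T : formula A L -> Prop) (n : nat) (Phi : formula A L -> Prop)
  (HT : forall phi, T phi -> sentence phi)
  (HPhi : forall phi, Phi phi -> fv_below n phi) :
  (forall (N : structure A L) (S : dom N -> Prop) (HS : closedS N S)
          (s0 : {x | S x}),
      models N T -> models (substr HS s0) T ->
      forall v : nat -> {x | S x},
        sat N Phi (fun k => proj1_sig (v k)) -> sat (substr HS s0) Phi v)
  <->
  (exists Theta : formula A L -> Prop,
      (forall theta, Theta theta -> universal theta /\ fv_below n theta) /\
      conseq T Phi Theta /\ conseq T Theta Phi).
Proof.
split.
- move=> HI.
  exists (fun th => (universal th /\ fv_below n th) /\ conseq T Phi (fun phi => phi = th)).
  split; first by move=> th [].
  split.
  + move=> M HM v Hv th [_ C]; exact: (C M HM v Hv th erefl).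
  + move=> M HM v HTh.
    case: (boolP ((\bot : A) == \top)) => [/eqP bt|Hnt].
    * move=> phi _; apply/eqP; rewrite -le1x -bt; exact: le0x.
    * apply: (satM HPhi Hnt _ HM HI) => th U1 F1 C1; apply: HTh; by split.
- case=> Theta [HTh [C1 C2]] N S HS s0 HN HSb v Hv.
  apply: (C2 _ HSb v) => th Tth.
  apply: universal_down; first exact: (proj1 (HTh th Tth)).
  exact: (C1 N HN _ Hv th Tth).
Qed.
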